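(* Let Alice hold a string $A$ and Bob hold a string $B$, and let $\ell=\mathrm{LCP}(A,B)$. Using a randomized public-coin protocol, they can find a number $\ell'\ge\ell$ such that either (1) $\ell'\le\ell^2$, using $O(\lg\lg\ell)$ rounds and $O(\lg\lg\ell)$ total communication, or (2) $\ell'\le|A|^2$, using $O(1)$ rounds and $O(\lg\lg\lg|A|)$ total communication.
   Context: $\mathrm{LCP}(A,B)$ is the length of the longest common prefix of $A$ and $B$. In the public-coin model the parties share an infinite string of independent unbiased random bits, and the result must be correct with probability at least a fixed constant greater than $1/2$. *)

(* Defs.v *)
From mathcomp Require Import all_boot all_algebra.
Set Implicit Arguments. Unset Strict Implicit. Unset Printing Implicit Defensive.
Import GRing.Theory Num.Theory.

Fixpoint lcp (S : eqType) (A B : seq S) : nat :=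
  match A, B with
  | a :: A', b :: B' => if a == b then (lcp A' B').+1 else 0
  | _, _ => 0
  end.

(* lg n = floor(log_2 n) (and 0 for n <= 1). *)
Definition lg (n : nat) : nat := trunc_log 2 n.

(* The shared public random string: infinitely many unbiased bits. *)
Definition rstring := nat -> bool.

Definition transcript := seq (seq bool).

(* A protocol: Alice speaks in rounds 0,2,4,..., Bob in rounds 1,3,5,...
   The speaker's next-message function sees its own input, the public random
   string and the transcript so far; returning None means "halt".
   The output is a function of public information only (random string and
   transcript), so both parties know it. *)
Record protocol (S : Type) := Protocol {
  alice_msg : seq S -> rstring -> transcript -> option (seq bool);
  bob_msg   : seq S -> rstring -> transcript -> option (seq bool);
  output    : rstring -> transcript -> nat }.

Fixpoint run_from (S : Type) (P : protocol S) (A B : seq S) (r : rstring)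
    (fuel : nat) (t : transcript) : option transcript :=
  match fuel with
  | 0 => None
  | k.+1 =>
    let m := if odd (size t) then bob_msg P B r t else alice_msg P A r t in
    match m with
    | None => Some t
    | Some x => run_from P A B r k (rcons t x)
    end
  end.

(* Execution allowing at most R rounds (messages): Some t iff the protocol
   halts after at most R messages, with final transcript t. *)
Definition run (S : Type) (P : protocol S) (A B : seq S) (r : rstring)
    (R : nat) : option transcript := run_from P A B r R.+1 [::].

Definition comm (t : transcript) : nat := sumn (map size t).

Definition good (S : Type) (P : protocol S) (A B : seq S) (r : rstring)
    (R K : nat) (ok : nat -> Prop) : Prop :=
  exists t, run P A B r R = Some t /\ comm t <= K /\ ok (output P r t).

(* Pr_r[E r] >= p, witnessed by finitely many cylinder sets: for some N,
   a set of N-bit prefixes of total measure >= p such that every random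
   string extending one of them lies in E. *)
Definition prob_at_least (E : rstring -> Prop) (p : rat) : Prop :=
  exists (N : nat) (T : {set N.-tuple bool}),
    (forall t, t \in T -> forall r : rstring,
        (forall i : 'I_N, r i = tnth t i) -> E r) /\
    (p * (2 ^ N)%:R <= (#|T|)%:R)%R.

(* Main.v *)
Require Import Defs.
From mathcomp Require Import all_boot all_algebra.
From mathcomp Require Import zify lra.
Set Implicit Arguments. Unset Strict Implicit. Unset Printing Implicit Defensive.
Import GRing.Theory Num.Theory.


Lemma lcp_sizeA (S : eqType) (A B : seq S) : lcp A B <= size A.
Proof. elim: A B => [|a A IH] [|b B] //=; case: ifP => // _; exact: IH. Qed.
Lemma lcp_sizeB (S : eqType) (A B : seq S) : lcp A B <= size B.
Proof. elim: A B => [|a A IH] [|b B] //=; case: ifP => // _; exact: IH. Qed.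
Lemma take_lcp (S : eqType) (A B : seq S) m : m <= lcp A B -> take m A = take m B.
Proof.
elim: A B m => [|a A IH] [|b B] [|m] //=; case: ifP => // /eqP -> H.
by rewrite (IH B m H).
Qed.
Lemma lcp_take (S : eqType) (A B : seq S) m :
  m <= size A -> m <= size B -> take m A = take m B -> m <= lcp A B.
Proof.
elim: A B m => [|a A IH] [|b B] [|m] //= HA HB [-> H]; rewrite eqxx; exact: IH.
Qed.

Fixpoint encf (k x : nat) : seq bool :=
  if k is k'.+1 then (if x == 0 then [::] else odd x :: encf k' x./2) else [::].
Fixpoint dec (s : seq bool) : nat := if s is b :: s' then b + (dec s').*2 else 0.
Lemma dec_enc k x : x <= k -> dec (encf k x) = x.
Proof.
elim: k x => [|k IH] x /=; first by rewrite leqn0 => /eqP ->.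
case: eqP => [->//|/eqP x0 H] /=; rewrite IH ?odd_double_half //.
rewrite -divn2; lia.
Qed.
Lemma size_enc k x m : x < 2 ^ m -> size (encf k x) <= m.
Proof.
elim: k x m => [|k IH] x m //=; case: eqP => //= /eqP x0.
case: m => [|m]; first by rewrite expn0; lia.
move=> H; apply: IH; rewrite -divn2; rewrite expnS in H; lia.
Qed.


Lemma prob_all (E : rstring -> Prop) (p : rat) :
  (p <= 1)%R -> (forall r, E r) -> prob_at_least E p.
Proof.
move=> p1 HE; exists 0, setT; split=> [t _ r _|]; first exact: HE.
by rewrite cardsT card_tuple expn0 mulr1.
Qed.

Definition msg2 (n : nat) : seq bool :=
  if n <= 1 then [:: false; n == 1] else true :: encf (lg (lg n)) (lg (lg n)).

Definition P2 (Sigma : finType) : protocol Sigma :=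
  Protocol (fun A r t => if t is [::] then Some (msg2 (size A)) else None)
           (fun B r t => None)
           (fun r t => match t with
                       | [:: false :: x :: _] => nat_of_bool x
                       | [:: true :: s] => 2 ^ (2 ^ (dec s).+1)
                       | _ => 0 end).

Lemma part2 (Sigma : finType) :
  (exists (P : protocol Sigma) (C : nat) (p : rat), (1 / 2 < p)%R /\
     forall A B : seq Sigma,
       prob_at_least
         (fun r => good P A B r C
                              (C * (lg (lg (lg (size A)))).+1)
                              (fun l' => lcp A B <= l' <= size A ^ 2)) p).
Proof.
exists (P2 Sigma), 3, 1%R; split; first by [].
move=> A B; apply: prob_all => // r.
exists [:: msg2 (size A)]; split; first by [].
have hl := lcp_sizeA A B.
rewrite /comm /= addn0 /msg2; case: ifP => [n1|n2].
  split; first by rewrite /=; lia.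
  by case: (size A) n1 hl => [|[|]] //=; case: (lcp A B) => [|[|]].
move/negbT: n2; rewrite -ltnNge => n2.
set a := lg (size A); set b := lg a.
have Ha : 2 ^ a <= size A < 2 ^ a.+1 by apply: trunc_log_bounds; lia.
have a1 : 0 < a.
  case: (posnP a) Ha => // ->; lia.
have Hb : 2 ^ b <= a < 2 ^ b.+1 by apply: trunc_log_bounds.
split.
  apply: (@leq_trans (lg b).+2); last by lia.
  rewrite [size _]/= ltnS; exact: size_enc (trunc_log_ltn _ _).
rewrite /= dec_enc //; apply/andP; split.
  apply: leq_trans hl _; apply: ltnW; apply: leq_trans (proj2 (andP Ha)) _.
  by rewrite leq_exp2l //; case/andP: Hb.
rewrite expnS mulnC expnM.
suff H : 2 ^ 2 ^ b <= size A by rewrite leq_exp2r.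
apply: leq_trans (proj1 (andP Ha)).
by rewrite leq_exp2l //; case/andP: Hb.
Qed.


Definition ix (Sigma : finType) (b : bool) (k : nat) (x : Sigma) : nat :=
  b + (k * #|Sigma| + enum_rank x).*2.

Lemma ix_inj (Sigma : finType) b k (x : Sigma) b' k' x' :
  ix b k x = ix b' k' x' -> [/\ b = b', k = k' & x = x'].
Proof.
move=> H.
have hb : b = b'.
  by have := congr1 odd H; rewrite /ix !oddD !odd_double !addbF !oddb.
have hn := congr1 half H; rewrite /ix !half_bit_double in hn.
have K0 : 0 < #|Sigma| by apply: leq_ltn_trans (ltn_ord (enum_rank x)).
have hk := congr1 (fun n => n %/ #|Sigma|) hn.
have hr := congr1 (fun n => n %% #|Sigma|) hn.
rewrite /= !divnMDl // !divn_small ?ltn_ord // !addn0 in hk.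
rewrite /= !modnMDl !modn_small ?ltn_ord // in hr.
split=> //; exact/enum_rank_inj/val_inj.
Qed.

Lemma ix_lt (Sigma : finType) b k (x : Sigma) M : k < M -> ix b k x < (M * #|Sigma|).*2.
Proof.
move=> kM; rewrite /ix.
have h1 : enum_rank x < #|Sigma| := ltn_ord (enum_rank x).
have h2 : k.+1 * #|Sigma| <= M * #|Sigma| by apply: leq_mul.
rewrite mulSn in h2.
rewrite -!muln2; case: b; rewrite /nat_of_bool; lia.
Qed.

Definition flip (c : nat) (r : rstring) : rstring := fun i => (i == c) (+) r i.

Fixpoint hs (Sigma : finType) (r : rstring) (b : bool) (j : nat) (s : seq Sigma) : bool :=
  if s is x :: s' then r (ix b j x) (+) hs r b j.+1 s' else false.

Lemma hs_cat (Sigma : finType) r b j (s1 s2 : seq Sigma) :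
  hs r b j (s1 ++ s2) = hs r b j s1 (+) hs r b (j + size s1) s2.
Proof.
elim: s1 j => [|x s1 IH] j /=; first by rewrite addn0.
by rewrite IH addbA addSnnS.
Qed.

Lemma hs_ext (Sigma : finType) r r' b j (s : seq Sigma) :
  (forall k (x : Sigma), j <= k -> r (ix b k x) = r' (ix b k x)) -> hs r b j s = hs r' b j s.
Proof.
elim: s j => [|x s IH] j //= H; rewrite H // IH // => k y hk; apply: H; lia.
Qed.

Lemma hs_ext_lt (Sigma : finType) r r' b j (s : seq Sigma) M :
  (forall i, i < (M * #|Sigma|).*2 -> r i = r' i) -> j + size s <= M ->
  hs r b j s = hs r' b j s.
Proof.
elim: s j => [|x s IH] j //= H hs; rewrite H ?ix_lt //; last by lia.
by rewrite IH //; lia.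
Qed.

Lemma decomp (Sigma : eqType) (x y : seq Sigma) :
  size x = size y -> x != y ->
  exists p a a' x2 y2, [/\ x = p ++ a :: x2, y = p ++ a' :: y2 & a != a'].
Proof.
elim: x y => [|a x IH] [|b y] //= [hs] hne.
case: (eqVneq a b) => [eab|nab]; last by exists [::], a, b, x, y.
subst b; have hne' : x != y by apply: contraNneq hne => ->.
have [p [c [c' [x2 [y2 [-> -> hc]]]]]] := IH y hs hne'.
by exists (a :: p), c, c', x2, y2.
Qed.

Lemma xor_flip (Sigma : finType) (p : seq Sigma) a a' x2 y2 b0 r b :
  a != a' ->
  let c := ix b0 (size p) a in
  hs (flip c r) b 0 (p ++ a :: x2) (+) hs (flip c r) b 0 (p ++ a' :: y2) =
  (b == b0) (+) (hs r b 0 (p ++ a :: x2) (+) hs r b 0 (p ++ a' :: y2)).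
Proof.
move=> naa c; rewrite !hs_cat /= !add0n.
have far : forall k (x : Sigma), (size p).+1 <= k -> flip c r (ix b k x) = r (ix b k x).
  move=> k x hk; rewrite /flip; case: eqP => //= /ix_inj [_ hk' _]; lia.
rewrite !(hs_ext _ far).
have e1 : flip c r (ix b (size p) a') = r (ix b (size p) a').
  rewrite /flip; case: eqP => //= /ix_inj [_ _ ha]; by rewrite ha eqxx in naa.
have e2 : flip c r (ix b (size p) a) = (b == b0) (+) r (ix b (size p) a).
  rewrite /flip; case: (eqVneq b b0) => [->|nb]; first by rewrite eqxx.
  by case: eqP => //= /ix_inj [hb _ _]; rewrite hb eqxx in nb.
rewrite e1 e2.
by case: (hs (flip c r) b 0 p); case: (b == b0); case: (r (ix b (size p) a));
   case: (r (ix b (size p) a')); case: (hs r b 0 p);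
   case: (hs r b (size p).+1 x2); case: (hs r b (size p).+1 y2).
Qed.


Lemma half_count (T : finType) (P Q : {set T}) (f : T -> T) :
  injective f -> P \subset Q -> {in P, forall x, f x \in Q :\: P} ->
  2 * #|P| <= #|Q|.
Proof.
move=> fi PQ fP.
have h1 : #|f @: P| = #|P| by rewrite card_imset.
have h2 : #|f @: P| <= #|Q :\: P|.
  by apply: subset_leq_card; apply/subsetP => y /imsetP [x xP ->]; exact: fP.
rewrite cardsD (setIidPr PQ) in h2.
have h3 : #|P| <= #|Q| by exact: subset_leq_card.
lia.
Qed.

Definition rt N (t : N.-tuple bool) : rstring := fun i => nth false t i.
Definition tflip N (c : nat) (t : N.-tuple bool) : N.-tuple bool :=
  [tuple (val i == c) (+) tnth t i | i < N].

Lemma tflipK N c : involutive (@tflip N c).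
Proof. by move=> t; apply: eq_from_tnth => i; rewrite !tnth_mktuple addKb. Qed.

Lemma rt_tflip N c (t : N.-tuple bool) : c < N -> rt (tflip c t) =1 flip c (rt t).
Proof.
move=> cN i; rewrite /rt /flip; case: (ltnP i N) => hi.
  have -> : i = Ordinal hi by [].
  by rewrite nth_mktuple (tnth_nth false).
rewrite !nth_default ?size_tuple //.
by case: eqP => // ei; lia.
Qed.

Lemma hs_eqfun (Sigma : finType) r r' b j (s : seq Sigma) :
  r =1 r' -> hs r b j s = hs r' b j s.
Proof. by move=> H; apply: hs_ext => k x _; exact: H. Qed.

Definition hpair (Sigma : finType) (r : rstring) (s : seq Sigma) : seq bool :=
  [:: hs r false 0 s; hs r true 0 s].

Lemma count_good (Sigma : finType) (x y : seq Sigma) M :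
  size x = M -> size y = M -> x != y ->
  3 * 2 ^ (M * #|Sigma|).*2 <=
  4 * #|[set t : ((M * #|Sigma|).*2).-tuple bool | hpair (rt t) x != hpair (rt t) y]|.
Proof.
move=> sx sy nxy.
set N := (M * #|Sigma|).*2.
have [p [a [a' [x2 [y2 [ex ey naa]]]]]] := decomp (etrans sx (esym sy)) nxy.
have pM : size p < M by rewrite -sx ex size_cat /=; lia.
set X := fun b (t : N.-tuple bool) => hs (rt t) b 0 x (+) hs (rt t) b 0 y.
have XF : forall b0 b t, X b (tflip (ix b0 (size p) a) t) = (b == b0) (+) X b t.
  move=> b0 b t; rewrite /X !(hs_eqfun _ _ _ (rt_tflip _ (ix_lt b0 a pM))) ex ey.
  exact: xor_flip.
set Z := [set t : N.-tuple bool | ~~ X false t && ~~ X true t].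
set Q1 := [set t : N.-tuple bool | ~~ X true t].
have h1 : 2 * #|Z| <= #|Q1|.
  apply: (@half_count _ _ _ (tflip (ix false (size p) a))).
  - exact: can_inj (tflipK _).
  - by apply/subsetP => t; rewrite !inE => /andP [].
  - move=> t; rewrite !inE !XF /= => /andP [-> ->]; by [].
have h2 : 2 * #|Q1| <= #|[set: N.-tuple bool]|.
  apply: (@half_count _ _ _ (tflip (ix true (size p) a))).
  - exact: can_inj (tflipK _).
  - exact: subsetT.
  - by move=> t; rewrite !inE !XF /= => ->.
have eT : [set t : N.-tuple bool | hpair (rt t) x != hpair (rt t) y] = ~: Z.
  apply/setP => t; rewrite !inE /hpair /X.
  by case: (hs (rt t) false 0 x); case: (hs (rt t) false 0 y);
     case: (hs (rt t) true 0 x); case: (hs (rt t) true 0 y).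
rewrite eT.
have hC := cardsC Z.
rewrite cardsT card_tuple card_bool in h2.
rewrite card_tuple card_bool in hC.
lia.
Qed.


Definition Mx (i : nat) : nat := if i is i'.+1 then 2 ^ (2 ^ i') else 1.

Definition P1 (Sigma : finType) : protocol Sigma :=
  Protocol
    (fun A r t => let i := (size t)./2 in
       if size A < Mx i then None else Some (hpair r (take (Mx i) A)))
    (fun B r t => let i := (size t)./2 in
       if (size B < Mx i) || (hpair r (take (Mx i) B) != last [::] t) then None
       else Some [::])
    (fun r t => (Mx (size t)./2).-1).

Fixpoint trans (Sigma : finType) (A : seq Sigma) (r : rstring) (k : nat) : transcript :=
  if k is k'.+1 then trans A r k' ++ [:: hpair r (take (Mx k') A); [::]] else [::].

Lemma size_trans (Sigma : finType) (A : seq Sigma) r k : size (trans A r k) = k.*2.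
Proof. by elim: k => //= k IH; rewrite size_cat IH /=; lia. Qed.

Lemma comm_trans (Sigma : finType) (A : seq Sigma) r k : comm (trans A r k) = k.*2.
Proof.
elim: k => //= k IH; move: IH; rewrite /comm map_cat sumn_cat /= => ->; lia.
Qed.

Lemma half_odd2 k : (k.*2.+1)./2 = k.
Proof. by rewrite -[k.*2.+1]/(true + k.*2) half_bit_double. Qed.

Lemma run_step (Sigma : finType) (A B : seq Sigma) r f i :
  Mx i <= lcp A B ->
  run_from (P1 Sigma) A B r f.+2 (trans A r i) = run_from (P1 Sigma) A B r f (trans A r i.+1).
Proof.
move=> hi; rewrite /= size_trans odd_double doubleK.
have hA := lcp_sizeA A B; have hB := lcp_sizeB A B.
rewrite ltnNge (leq_trans hi hA) /=.
rewrite size_rcons size_trans oddS odd_double /= ?half_odd2 ?uphalf_double last_rcons.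
rewrite ltnNge (leq_trans hi hB) /= (take_lcp hi) eqxx /=.
by rewrite -!cats1 -catA.
Qed.

Lemma run_iter (Sigma : finType) (A B : seq Sigma) r k f :
  (forall i, i < k -> Mx i <= lcp A B) ->
  run_from (P1 Sigma) A B r (f + k.*2) [::] = run_from (P1 Sigma) A B r f (trans A r k).
Proof.
elim: k f => [|k IH] f H; first by rewrite addn0.
have -> : f + k.+1.*2 = f.+2 + k.*2 by rewrite doubleS; lia.
rewrite IH; last by move=> i hi; apply: H; lia.
by rewrite run_step //; apply: H.
Qed.

Lemma run_last (Sigma : finType) (A B : seq Sigma) r f i :
  ~~ [&& Mx i <= size A, Mx i <= size B &
        hpair r (take (Mx i) A) == hpair r (take (Mx i) B)] ->
  exists t, run_from (P1 Sigma) A B r f.+2 (trans A r i) = Some t /\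
            comm t <= (i.*2).+2 /\ (size t)./2 = i.
Proof.
move=> H; rewrite /= size_trans odd_double doubleK.
case: ifP => hA.
  by exists (trans A r i); rewrite comm_trans size_trans doubleK; split=> //; split=> //; lia.
rewrite size_rcons size_trans oddS odd_double /= ?half_odd2 ?uphalf_double last_rcons.
rewrite leqNgt hA /= in H.
case: ifP => [_|hB]; last first.
  by move: hB H; case: (leqP (Mx i) (size B)) => //= _; rewrite eq_sym; case: (_ == _).
exists (rcons (trans A r i) (hpair r (take (Mx i) A))); split => //.
rewrite size_rcons size_trans half_odd2; split => //.
by rewrite /comm -cats1 map_cat sumn_cat -/(comm _) comm_trans /=; lia.
Qed.


Lemma out_bound l i0 : (forall i, i < i0 -> Mx i <= l) -> (Mx i0).-1 <= l ^ 2.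
Proof.
case: i0 => [|[|i]] H //=.
  have := H 0 isT; rewrite /= !expnS expn0 => h; nia.
have := H i.+1 (ltnSn _); rewrite /= => h.
apply: leq_trans (leq_pred _) _.
rewrite expnS mulnC expnM; by rewrite leq_exp2r.
Qed.

Lemma part1 (Sigma : finType) :
  (exists (P : protocol Sigma) (C : nat) (p : rat), (1 / 2 < p)%R /\
     forall A B : seq Sigma,
       prob_at_least
         (fun r => good P A B r (C * (lg (lg (lcp A B))).+1)
                              (C * (lg (lg (lcp A B))).+1)
                              (fun l' => lcp A B <= l' <= lcp A B ^ 2)) p).
Proof.
exists (P1 Sigma), 6, (3 / 4)%R; split; first by lra.
move=> A B.
set l := lcp A B; set g := lg (lg l).
have wit : l < Mx g.+2.
  rewrite /=; apply: leq_trans (@trunc_log_ltn 2 l _) _ => //.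
  rewrite leq_exp2l //; exact: trunc_log_ltn.
have exP : exists i, l < Mx i by exists g.+2.
case: (ex_minnP exP) => i0 Hi0 Hmin.
have below : forall i, i < i0 -> Mx i <= l.
  by move=> i hi; rewrite leqNgt; apply/negP => h; have := Hmin i h; lia.
have i0g : i0 <= g.+2 := Hmin _ wit.
have goodr : forall r, ~~ [&& Mx i0 <= size A, Mx i0 <= size B &
        hpair r (take (Mx i0) A) == hpair r (take (Mx i0) B)] ->
    good (P1 Sigma) A B r (6 * g.+1) (6 * g.+1) (fun l' => l <= l' <= l ^ 2).
  move=> r cond; rewrite /good /run.
  have -> : (6 * g.+1).+1 = ((6 * g.+1).+1 - i0.*2 - 2).+2 + i0.*2 by lia.
  rewrite run_iter //.
  have [t [ht [hc hs]]] := run_last ((6 * g.+1).+1 - i0.*2 - 2) cond.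
  exists t; split => //; split; first by lia.
  rewrite /= hs; apply/andP; split; first by lia.
  exact: out_bound.
case: (boolP [&& Mx i0 <= size A & Mx i0 <= size B]) => hsz; last first.
  apply: prob_all; first by [].
  move=> r; apply: goodr; move: hsz.
  by case: (Mx i0 <= size A); case: (Mx i0 <= size B).
case/andP: hsz => hsA hsB.
set m := Mx i0.
set x := take m A; set y := take m B.
have sx : size x = m by rewrite size_takel.
have sy : size y = m by rewrite size_takel.
have nxy : x != y.
  apply/eqP => e; have := lcp_take hsA hsB e; rewrite -/l; lia.
exists (m * #|Sigma|).*2,
  [set t : ((m * #|Sigma|).*2).-tuple bool | hpair (rt t) x != hpair (rt t) y].
split.
  move=> t; rewrite inE => ht r hr; apply: goodr.
  rewrite hsA hsB /= -/m -/x -/y.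
  have ext : forall s : seq Sigma, size s = m -> hpair r s = hpair (rt t) s.
    move=> s ss; rewrite /hpair.
    have H : forall i, i < (m * #|Sigma|).*2 -> r i = rt t i.
      by move=> i hi; have := hr (Ordinal hi); rewrite (tnth_nth false).
    by rewrite !(hs_ext_lt _ H) // add0n ss.
  by rewrite !ext.
have h := count_good sx sy nxy.
move: h; rewrite -(ler_nat rat) !natrM => h.
lra.
Qed.

Unset Implicit Arguments.
Theorem lemma9 (Sigma : finType) :
  (exists (P : protocol Sigma) (C : nat) (p : rat), (1 / 2 < p)%R /\
     forall A B : seq Sigma,
       prob_at_least
         (fun r => good P A B r (C * (lg (lg (lcp A B))).+1)
                              (C * (lg (lg (lcp A B))).+1)
                              (fun l' => lcp A B <= l' <= lcp A B ^ 2)) p)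
  /\
  (exists (P : protocol Sigma) (C : nat) (p : rat), (1 / 2 < p)%R /\
     forall A B : seq Sigma,
       prob_at_least
         (fun r => good P A B r C
                              (C * (lg (lg (lg (size A)))).+1)
                              (fun l' => lcp A B <= l' <= size A ^ 2)) p).
Proof. split; [exact: part1 | exact: part2]. Qed.
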